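(* Let $n\ge 3$ and let $P_n(x)=x^n+a_{n-2}x^{n-2}+\cdots+a_1x+a_0$ be a real monic polynomial of degree $n$ whose coefficient of $x^{n-1}$ is zero. Put $P_{n-1}=\frac1n P_n'$ and define $R_{n-2}$ by $$P_n(x)=\frac{x}{n}P_n'(x)-R_{n-2}(x)=xP_{n-1}(x)-R_{n-2}(x).$$ Assume $P_{n-1}$ has $n-1$ distinct real roots $\alpha_1<\alpha_2<\cdots<\alpha_{n-1}$ and $R_{n-2}$ has $n-2$ distinct real roots $\beta_1<\cdots<\beta_{n-2}$. If $n$ is even, then $$\alpha_1<\beta_1<\alpha_2<\beta_2<\cdots<\alpha_{n-2}<\beta_{n-2}<\alpha_{n-1}$$ if and only if $$\max_{k\in\{1,\dots,\frac{n-2}{2}\}}R_{n-2}(\alpha_{2k})<0<\min_{k\in\{0,\dots,\frac{n-2}{2}\}}R_{n-2}(\alpha_{2k+1}).$$ If $n$ is odd, then the same interlacing holds if and only if $$\max_{k\in\{0,\dots,\frac{n-3}{2}\}}R_{n-2}(\alpha_{2k+1})<0<\min_{k\in\{1,\dots,\frac{n-1}{2}\}}R_{n-2}(\alpha_{2k}).$$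
   Context: All polynomials have real coefficients. $R_{n-2}(x)=xP_{n-1}(x)-P_n(x)=\sum_{k=0}^{n-2}\left(\tfrac{k}{n}-1\right)a_kx^k$. *)

(* Defs.v *)
From HB Require Import structures.
From mathcomp Require Import all_boot all_order all_algebra.
Set Implicit Arguments. Unset Strict Implicit. Unset Printing Implicit Defensive.
Import Order.TTheory GRing.Theory Num.Theory.
Local Open Scope ring_scope.

Definition Pnm1 (R : realFieldType) (n : nat) (P : {poly R}) : {poly R} :=
  (n%:R)^-1 *: P^`().

Definition Rnm2 (R : realFieldType) (n : nat) (P : {poly R}) : {poly R} :=
  'X * Pnm1 n P - P.

(* Main.v *)
Require Import Defs.
From HB Require Import structures.
From mathcomp Require Import all_boot all_order all_algebra.
From mathcomp Require Import ring lra zify.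
Import Order.TTheory GRing.Theory Num.Theory.
Set Implicit Arguments. Unset Strict Implicit.
Local Open Scope ring_scope.

Lemma coefXsubCM (R : realFieldType) (p : {poly R}) x i :
  (('X - x%:P) * p)`_i.+1 = p`_i - x * p`_i.+1.
Proof. by rewrite mulrBl coefB coefXM coefCM. Qed.

Lemma coef0XsubCM (R : realFieldType) (p : {poly R}) x :
  (('X - x%:P) * p)`_0 = - (x * p`_0).
Proof. by rewrite mulrBl coefB coefXM coefCM sub0r. Qed.

Lemma vieta (R : realFieldType) (f : nat -> R) (s : seq nat) (a b : nat) :
  (\prod_(i <- a :: b :: s) ('X - (f i)%:P))`_(size s).+1 ^+ 2
   - 2 * (\prod_(i <- a :: b :: s) ('X - (f i)%:P))`_(size s)
  = \sum_(i <- a :: b :: s) f i ^+ 2.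
Proof.
elim: s a b => [|c s IH] a b /=.
  rewrite !big_cons !big_nil !mulr1 addr0 coefXsubCM coef0XsubCM
    !coefB !coefX !coefC /=; ring.
have -> : \prod_(i <- a::b::c::s) ('X - (f i)%:P)
   = ('X - (f a)%:P) * \prod_(i <- b::c::s) ('X - (f i)%:P) by rewrite big_cons.
rewrite [in RHS]big_cons -IH !coefXsubCM /=.
have r2 : (\prod_(i <- b::c::s) ('X - (f i)%:P))`_(size s).+2 = 1.
  have /monicP := monic_prod_XsubC (b::c::s) predT f.
  by rewrite /lead_coef size_prod_XsubC.
rewrite r2; ring.
Qed.

Lemma sign_prod (R : realFieldType) (s : seq nat) (f : nat -> R) :
  (forall i, i \in s -> f i != 0) ->
  0 < (-1) ^+ (count (fun i => f i < 0) s) * \prod_(i <- s) f i.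
Proof.
elim: s => [|a s IH] H; first by rewrite big_nil /= expr0 mulr1 ltr01.
rewrite big_cons /= exprD mulrACA; apply: mulr_gt0; last first.
  by apply: IH => i hi; apply: H; rewrite inE hi orbT.
have : f a != 0 by apply: H; rewrite inE eqxx.
case: (ltrgtP (f a) 0) => // h _; rewrite /= ?expr1 ?expr0 ?mul1r ?mulN1r //.
by rewrite oppr_gt0.
Qed.

Lemma sgn_odd (R : realFieldType) (e : nat) (x : R) :
  0 < (-1) ^+ e * x <-> (if odd e then x < 0 else 0 < x).
Proof.
rewrite -signr_odd; case: (odd e); rewrite ?expr1 ?expr0 ?mul1r ?mulN1r //.
by rewrite oppr_gt0.
Qed.

Lemma mono_lt (R : realFieldType) (K : nat) (f : nat -> R) :
  (forall i, (1 <= i)%N -> (i < K)%N -> f i < f i.+1) ->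
  forall i j, (1 <= i)%N -> (i < j)%N -> (j <= K)%N -> f i < f j.
Proof.
move=> H i; elim=> [|j IH] // hi; rewrite ltnS leq_eqVlt => /orP[/eqP <- | hij] hj.
  by apply: H => //; lia.
apply: lt_trans (IH hi hij _) _; first lia.
apply: H; lia.
Qed.

Lemma mono_le (R : realFieldType) (K : nat) (f : nat -> R) :
  (forall i, (1 <= i)%N -> (i < K)%N -> f i < f i.+1) ->
  forall i j, (1 <= i)%N -> (i <= j)%N -> (j <= K)%N -> f i <= f j.
Proof.
move=> H i j h1; rewrite leq_eqVlt => /orP[/eqP <- | hij] hj //.
by apply/ltW; exact: (mono_lt H h1 hij hj).
Qed.

Lemma main_equiv (R : realFieldType) (M : nat) (c : R) (alpha beta : nat -> R)
  (r : R -> R) :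
  (2 <= M)%N -> 0 < c ->
  (forall x, r x = c * \prod_(i <- iota 1 M.-1) (x - beta i)) ->
  (forall i, (1 <= i)%N -> (i < M)%N -> alpha i < alpha i.+1) ->
  (forall i, (1 <= i)%N -> (i < M.-1)%N -> beta i < beta i.+1) ->
  (forall i, (1 <= i <= M.-1)%N -> r (beta i) = 0) ->
  (forall i, (1 <= i <= M.-1)%N -> alpha i < beta i /\ beta i < alpha i.+1) <->
  (forall j, (1 <= j <= M)%N -> 0 < (-1) ^+ (M - j) * r (alpha j)).
Proof.
move=> hM hc hr ha hb hrb.
set N := M.-1 in hr hb hrb *.
have eN : (N = M - 1)%N by rewrite /N; lia.
clearbody N.
pose cnt j := count (fun i => alpha j < beta i) (iota 1 N).
have memI : forall i, (i \in iota 1 N) = (1 <= i <= N)%N.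
  by move=> i; rewrite mem_iota add1n ltnS.
have key : forall j, (forall i, i \in iota 1 N -> alpha j != beta i) ->
    0 < (-1) ^+ (cnt j) * r (alpha j).
  move=> j hne; rewrite hr mulrCA; apply: mulr_gt0 => //.
  have -> : cnt j = count (fun i => alpha j - beta i < 0) (iota 1 N).
    by apply: eq_count => i; rewrite subr_lt0.
  by apply: (@sign_prod _ _ (fun i => alpha j - beta i)) => i hi; rewrite subr_eq0 hne.
have cnt_split : forall j k, (k <= N)%N -> cnt j =
   addn (count (fun i => alpha j < beta i) (iota 1 k))
    (count (fun i => alpha j < beta i) (iota (1 + k) (N - k))).
  move=> j k hk; rewrite /cnt -count_cat -iotaD subnKC //.
split.
- move=> I j /andP[j1 jM].
  have cmp : forall i, (1 <= i <= N)%N ->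
      if (i < j)%N then beta i < alpha j else alpha j < beta i.
    move=> i /andP[i1 iN]; case: ifP => hij.
      have [_ h] := I i ltac:(lia).
      apply: lt_le_trans h _; apply: (mono_le ha); lia.
    have [h _] := I i ltac:(lia).
    apply: le_lt_trans _ h; apply: (mono_le ha); lia.
  have hcnt : cnt j = (M - j)%N.
    rewrite (cnt_split j j.-1); last lia.
    rewrite (@eq_in_count _ _ pred0 (iota 1 j.-1)) ?count_pred0; last first.
      move=> i; rewrite mem_iota => hi /=.
      have := cmp i ltac:(lia); have -> : (i < j)%N by lia.
      by move=> h; apply/negbTE; rewrite -leNgt ltW.
    rewrite (@eq_in_count _ _ predT) ?count_predT ?size_iota; first lia.
    move=> i; rewrite mem_iota => hi /=.
    by have := cmp i ltac:(lia); have -> : (i < j)%N = false by lia.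
  rewrite -hcnt; apply: key => i; rewrite memI => hi.
  have := cmp i hi; case: ifP => _ h; first by rewrite gt_eqF.
  by rewrite lt_eqF.
- move=> S.
  have nz : forall j, (1 <= j <= M)%N -> r (alpha j) != 0.
    by move=> j hj; apply/eqP => h; have := S j hj; rewrite h mulr0 ltxx.
  have ne : forall j, (1 <= j <= M)%N -> forall i, i \in iota 1 N ->
      alpha j != beta i.
    move=> j hj i; rewrite memI => hi; apply/eqP => e.
    by move: (nz j hj); rewrite e hrb ?eqxx //; rewrite -eN.
  have par : forall j, (1 <= j <= M)%N -> odd (cnt j) = odd (M - j).
    move=> j hj; have h1 := key j (ne j hj); have h2 := S j hj.
    move: h1 h2; rewrite !sgn_odd.
    by case: odd; case: odd => // a b; exfalso; lra.
  have mono : forall j, (1 <= j)%N -> (j < M)%N -> (cnt j.+1 <= cnt j)%N.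
    move=> j h1 h2; apply: sub_count => i /= h.
    exact: lt_trans (ha j h1 h2) h.
  have bnd : forall j, (cnt j <= N)%N.
    by move=> j; rewrite (leq_trans (count_size _ _)) // size_iota.
  have lo : forall d, (d <= N)%N -> (d <= cnt (M - d))%N.
    elim=> [|d IH] hd //.
    have e : ((M - d.+1).+1 = M - d)%N by lia.
    have m1 := mono (M - d.+1)%N ltac:(lia) ltac:(lia).
    rewrite e in m1.
    have p1 := par (M - d.+1)%N ltac:(lia).
    have p2 := par (M - d)%N ltac:(lia).
    have i1 := IH ltac:(lia).
    lia.
  have up : forall j, (1 <= j <= M)%N -> (cnt j <= M - j)%N.
    elim=> [|j IH] // hj.
    case: (posnP j) => [j0|jp].
      by rewrite j0; have := bnd 1%N; lia.
    have m1 := mono j ltac:(lia) ltac:(lia).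
    have p1 := par j ltac:(lia).
    have p2 := par j.+1 hj.
    have i1 := IH ltac:(lia).
    lia.
  have eq : forall j, (1 <= j <= M)%N -> cnt j = (M - j)%N.
    move=> j hj; apply/eqP; rewrite eqn_leq up //=.
    have := lo (M - j)%N ltac:(lia).
    by have -> : (M - (M - j) = j)%N by lia.
  move=> i hi; split.
  + rewrite ltNge; apply/negP => h.
    have : (cnt i <= N - i)%N.
      rewrite (cnt_split i i); last lia.
      rewrite (@eq_in_count _ _ pred0 (iota 1 i)) ?count_pred0; last first.
        move=> k; rewrite mem_iota => hk /=.
        apply/negbTE; rewrite -leNgt; apply: le_trans h.
        apply: (mono_le hb); lia.
      by rewrite add0n (leq_trans (count_size _ _)) // size_iota.
    rewrite eq; lia.
  + rewrite ltNge; apply/negP => h.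
    have : (N - i.-1 <= cnt i.+1)%N.
      rewrite (cnt_split i.+1 i.-1); last lia.
      rewrite (@eq_in_count _ _ predT (iota (1 + i.-1) _)) ?count_predT ?size_iota.
        exact: leq_addl.
      move=> k hk /=; rewrite lt_neqAle ne ?memI //=; last first.
        - move: hk; rewrite mem_iota; lia.
        - lia.
      apply: le_trans h _; apply: (mono_le hb); move: hk; rewrite mem_iota; lia.
    rewrite eq; lia.
Qed.

Lemma factor (R : realFieldType) (p : {poly R}) (f : nat -> R) (s : seq nat) :
  uniq (map f s) -> (forall i, i \in s -> root p (f i)) ->
  (size p <= (size s).+1)%N ->
  p = p`_(size s) *: \prod_(i <- s) ('X - (f i)%:P).
Proof.
move=> hu hr hs.
have [q eq] : exists q, p = q * \prod_(z <- map f s) ('X - z%:P).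
  apply: uniq_roots_prod_XsubC; last by rewrite uniq_rootsE.
  by apply/allP => x /mapP [i hi ->]; exact: hr.
rewrite big_map in eq.
set pr := \prod_(i <- s) ('X - (f i)%:P) in eq *.
have mon : pr \is monic by apply: monic_prod_XsubC.
have sq : (size q <= 1)%N.
  case: (eqVneq q 0) => [->|qn]; first by rewrite size_poly0.
  by move: hs; rewrite eq size_Mmonic // /pr size_prod_XsubC addnS /= addnC -[(size s).+1]addn1 leq_add2l.
rewrite eq (size1_polyC sq) coefCM mul_polyC.
have -> : pr`_(size s) = 1.
  by move/monicP: mon; rewrite /lead_coef /pr size_prod_XsubC.
by rewrite mulr1.
Qed.

Lemma uniq_mono (R : realFieldType) (K : nat) (f : nat -> R) :
  (forall i, (1 <= i)%N -> (i < K)%N -> f i < f i.+1) ->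
  uniq (map f (iota 1 K)).
Proof.
move=> H; rewrite map_inj_in_uniq ?iota_uniq // => i j; rewrite !mem_iota => hi hj e.
case: (ltngtP i j) => // h.
  by have := mono_lt H (i:=i) (j:=j) ltac:(lia) h ltac:(lia); rewrite e ltxx.
by have := mono_lt H (i:=j) (j:=i) ltac:(lia) h ltac:(lia); rewrite e ltxx.
Qed.

Unset Implicit Arguments.

Theorem proposition1 (R : realFieldType) (n : nat) (P : {poly R})
  (alpha beta : nat -> R) :
  (3 <= n)%N ->
  size P = n.+1 -> P \is monic -> P`_n.-1 = 0 ->
  (forall i, (1 <= i)%N -> (i < n.-1)%N -> alpha i < alpha i.+1) ->
  (forall x, root (Pnm1 n P) x <-> exists2 i, (1 <= i <= n.-1)%N & x = alpha i) ->
  (forall i, (1 <= i)%N -> (i < n.-2)%N -> beta i < beta i.+1) ->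
  (forall x, root (Rnm2 n P) x <-> exists2 i, (1 <= i <= n.-2)%N & x = beta i) ->
  (~~ odd n ->
     ((forall i, (1 <= i <= n.-2)%N -> alpha i < beta i /\ beta i < alpha i.+1)
      <->
      ((forall k, (1 <= k <= (n.-2)./2)%N -> (Rnm2 n P).[alpha k.*2] < 0) /\
       (forall k, (k <= (n.-2)./2)%N -> 0 < (Rnm2 n P).[alpha k.*2.+1])))) /\
  (odd n ->
     ((forall i, (1 <= i <= n.-2)%N -> alpha i < beta i /\ beta i < alpha i.+1)
      <->
      ((forall k, (k <= (n - 3)./2)%N -> (Rnm2 n P).[alpha k.*2.+1] < 0) /\
       (forall k, (1 <= k <= (n.-1)./2)%N -> 0 < (Rnm2 n P).[alpha k.*2])))).
Proof.
move=> n3 sP mP an1 ha hPa hb hRb.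
set Q := Pnm1 n P in hPa *.
set Rp := Rnm2 n P in hRb *.
pose t := (n%:R : R)^-1.
have nR : (n%:R : R) != 0 by rewrite pnatr_eq0; lia.
have tn : t * n%:R = 1 by rewrite mulVf.
have tpos : 0 < t by rewrite invr_gt0 ltr0n; lia.
have coefQ : forall k, Q`_k = t * (P`_k.+1 *+ k.+1).
  by move=> k; rewrite /Q /Pnm1 coefZ coef_deriv.
have Pn : P`_n = 1 by move/monicP: mP; rewrite /lead_coef sP.
have Pbig : forall j, (n < j)%N -> P`_j = 0.
  by move=> j hj; rewrite nth_default // sP.
have coefR : forall k, Rp`_k.+1 = Q`_k - P`_k.+1.
  by move=> k; rewrite /Rp /Rnm2 coefB coefXM.
set a := P`_(n.-2).
have sQ : (size Q <= (size (iota 1 n.-1)).+1)%N.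
  rewrite size_iota; apply/leq_sizeP => j hj.
  by rewrite coefQ Pbig ?mul0rn ?mulr0 //; lia.
have Qn : Q`_(size (iota 1 n.-1)) = 1.
  by rewrite size_iota coefQ prednK ?Pn //; lia.
have Qf := factor (uniq_mono ha) _ sQ.
rewrite Qn scale1r in Qf.
have {}Qf : Q = \prod_(i <- iota 1 n.-1) ('X - (alpha i)%:P).
  apply: Qf => i; rewrite mem_iota => hi; apply/hPa; exists i => //; lia.
have eI : iota 1 n.-1 = [:: 1, 2 & iota 3 (n - 3)]%N.
  by rewrite (_ : n.-1 = (n - 3).+2)%N; [done | lia].
have V := vieta alpha (iota 3 (n - 3)) 1 2.
rewrite size_iota -eI -Qf !coefQ in V.
have e1 : ((n - 3).+2 = n.-1)%N by lia.
have e2 : ((n - 3).+1 = n.-2)%N by lia.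
rewrite e1 e2 an1 mul0rn mulr0 -/a in V.
have pos : 0 < \sum_(i <- iota 1 n.-1) alpha i ^+ 2.
  rewrite eI !big_cons.
  have s0 : 0 <= \sum_(i <- iota 3 (n - 3)) alpha i ^+ 2.
    by apply: sumr_ge0 => i _; exact: sqr_ge0.
  have a12 : alpha 1 < alpha 2 by apply: ha; lia.
  move: s0; set S := \sum_(_ <- _) _ => s0.
  have h1 : 0 < (alpha 2 - alpha 1) ^+ 2 by rewrite exprn_gt0 // subr_gt0.
  have h2 : 0 <= (alpha 1 + alpha 2) ^+ 2 by apply: sqr_ge0.
  nra.
have kpos : 0 < (n.-2)%:R :> R by rewrite ltr0n; lia.
have an : a < 0.
  rewrite -mulr_natr in V.
  have h : a * (t * (n.-2)%:R) < 0.
    have -> : a * (t * (n.-2)%:R) = t * (a * (n.-2)%:R) by ring.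
    lra.
  by move: h; rewrite pmulr_llt0 // mulr_gt0.
set c := Rp`_(n.-2).
have htk : t * (n.-2)%:R = 1 - 2 * t.
  have en : (n%:R : R) = (n.-2)%:R + 2 by rewrite -natrD; congr (_%:R); lia.
  move: tn; rewrite en mulrDr => tn; lra.
have cpos : 0 < c.
  rewrite /c (_ : n.-2 = (n - 3).+1)%N; last lia.
  rewrite coefR coefQ e2 -/a -mulr_natr.
  have -> : t * (a * (n.-2)%:R) = a * (t * (n.-2)%:R) by ring.
  rewrite htk; nra.
have sR : (size Rp <= (size (iota 1 n.-2)).+1)%N.
  rewrite size_iota; apply/leq_sizeP => j hj.
  case: j hj => [|j] hj; first lia.
  rewrite coefR coefQ.
  have [e|[e|e]] : j = n.-2 \/ j = n.-1 \/ (n < j.+1)%N by lia.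
  - rewrite e (_ : n.-2.+1 = n.-1)%N ?an1 ?mul0rn ?mulr0 ?subr0 //; lia.
  - rewrite e prednK ?Pn ?tn ?subrr //; lia.
  - by rewrite !Pbig ?mul0rn ?mulr0 ?subr0 //; lia.
have Rf := factor (uniq_mono hb) _ sR.
rewrite size_iota -/c in Rf.
have {}Rf : Rp = c *: \prod_(i <- iota 1 n.-2) ('X - (beta i)%:P).
  apply: Rf => i; rewrite mem_iota => hi; apply/hRb; exists i => //; lia.
have E : (forall i, (1 <= i <= n.-2)%N -> alpha i < beta i /\ beta i < alpha i.+1) <->
  (forall j, (1 <= j <= n.-1)%N -> 0 < (-1) ^+ (n.-1 - j) * Rp.[alpha j]).
  apply: (@main_equiv R n.-1 c alpha beta (fun x => Rp.[x])) => //.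
  - lia.
  - move=> x; rewrite Rf hornerZ horner_prod; congr (_ * _).
    by apply: eq_bigr => i _; rewrite hornerXsubC.
  - by move=> i hi; apply/eqP; apply/hRb; exists i.
rewrite E; split => hn; split.
- move=> S; split.
  + move=> k hk; have := S k.*2 ltac:(lia); rewrite sgn_odd.
    by have -> : odd (n.-1 - k.*2) = true by lia.
  + move=> k hk; have := S k.*2.+1 ltac:(lia); rewrite sgn_odd.
    by have -> : odd (n.-1 - k.*2.+1) = false by lia.
- move=> [A B] j hj; rewrite sgn_odd; case: (boolP (odd j)) => oj.
  + have -> : odd (n.-1 - j) = false by lia.
    have ej : j = (j./2).*2.+1 by lia.
    rewrite ej; apply: B; lia.
  + have -> : odd (n.-1 - j) = true by lia.
    have ej : j = (j./2).*2 by lia.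
    rewrite ej; apply: A; lia.
- move=> S; split.
  + move=> k hk; have := S k.*2.+1 ltac:(lia); rewrite sgn_odd.
    by have -> : odd (n.-1 - k.*2.+1) = true by lia.
  + move=> k hk; have := S k.*2 ltac:(lia); rewrite sgn_odd.
    by have -> : odd (n.-1 - k.*2) = false by lia.
- move=> [A B] j hj; rewrite sgn_odd; case: (boolP (odd j)) => oj.
  + have -> : odd (n.-1 - j) = true by lia.
    have ej : j = (j./2).*2.+1 by lia.
    rewrite ej; apply: A; lia.
  + have -> : odd (n.-1 - j) = false by lia.
    have ej : j = (j./2).*2 by lia.
    rewrite ej; apply: B; lia.
Qed.
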